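(* Let $A\in\mathcal S_n^+$ with $\operatorname{rk}(A)=\operatorname{st}_+(A)=r$, and suppose $A=BCB^T$ where $B\in\mathbb R_+^{n\times r}$, $C\in\mathbb R_+^{r\times r}$ is symmetric, and at least one of $B$, $C$ is entrywise positive. Then $A\notin\partial\mathcal E_n$.
   Context: $\mathcal S_n^+$ is the set of $n\times n$ symmetric entrywise nonnegative real matrices; $\mathbb R_+^{p\times q}$ the entrywise nonnegative $p\times q$ real matrices. The SNT-rank $\operatorname{st}_+(A)$ of $A\in\mathcal S_n^+$ is the minimal $k$ such that $A=BCB^T$ with $B\in\mathbb R_+^{n\times k}$ and $C\in\mathcal S_k^+$. $\mathcal E_n=\{A\in\mathcal S_n^+:\operatorname{rk}(A)=\operatorname{st}_+(A)\}$. $\partial\mathcal E_n$ is the set of $A\in\mathcal E_n$ such that $A-\alpha uu^T\notin\mathcal E_n$ for every $\alpha>0$, where $u$ is the Perron eigenvector of $A$ (an entrywise nonnegative unit eigenvector for the spectral radius of $A$). *)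

(* Defs.v *)
From mathcomp Require Import all_boot all_order all_algebra.
From mathcomp Require Import reals.
Set Implicit Arguments. Unset Strict Implicit. Unset Printing Implicit Defensive.
Import Order.TTheory GRing.Theory Num.Theory.
Local Open Scope ring_scope.

Section Defs.
Variable R : realType.

Definition nonneg_mx p q (M : 'M[R]_(p, q)) : Prop := forall i j, 0 <= M i j.
Definition pos_mx p q (M : 'M[R]_(p, q)) : Prop := forall i j, 0 < M i j.
Definition SNN n (A : 'M[R]_n) : Prop := A^T = A /\ nonneg_mx A.

Definition snt_fact n (A : 'M[R]_n) (k : nat) : Prop :=
  exists (B : 'M[R]_(n, k)) (C : 'M[R]_k),
    nonneg_mx B /\ SNN C /\ A = B *m C *m B^T.

Definition is_st_plus n (A : 'M[R]_n) (k : nat) : Prop :=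
  snt_fact A k /\ forall m, snt_fact A m -> (k <= m)%N.

Definition in_E n (A : 'M[R]_n) : Prop := SNN A /\ is_st_plus A (\rank A).

(* spectral radius: largest absolute value of an eigenvalue, which is itself
   attained as an eigenvalue (for symmetric real matrices all eigenvalues are real) *)
Definition is_spectral_radius n (A : 'M[R]_n) (rho : R) : Prop :=
  eigenvalue A rho /\ forall l, eigenvalue A l -> `|l| <= rho.

Definition perron_vec n (A : 'M[R]_n) (u : 'cV[R]_n) : Prop :=
  nonneg_mx u /\ \sum_i (u i 0) ^+ 2 = 1 /\
  exists rho, is_spectral_radius A rho /\ A *m u = rho *: u.

Definition in_bdE n (A : 'M[R]_n) : Prop :=
  in_E A /\ forall u : 'cV[R]_n, perron_vec A u ->
    forall alpha : R, 0 < alpha -> ~ in_E (A - alpha *: (u *m u^T)).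

End Defs.

(* Main.v *)
Require Import Defs.
From mathcomp Require Import all_boot all_order all_algebra.
From mathcomp Require Import reals.
From mathcomp Require Import all_classical all_reals all_analysis.
From mathcomp Require Import ring lra.
Import Order.TTheory GRing.Theory Num.Theory.
Import numFieldNormedType.Exports.
Set Implicit Arguments. Unset Strict Implicit.
Local Open Scope classical_set_scope.
Local Open Scope ring_scope.

Lemma exmax (R : realType) n (f g : 'rV[R]_n -> R) : continuous f -> continuous g ->
  (exists x, g x = 1) -> (forall x, g x = 1 -> forall i, `|x 0 i| <= 1) ->
  exists x, g x = 1 /\ forall y, g y = 1 -> f y <= f x.
Proof.
move=> cf cg [x0 gx0] gb.
have S0 : [set x | g x = 1] !=set0 by exists x0.
have cS : compact [set x | g x = 1].
  apply: bounded_closed_compact.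
    exists 1; split; first by [].
    move=> M M1 x /= gx.
    rewrite [leLHS]/Num.Def.normr /= mx_normrE; apply/bigmax_leP; split; first exact: ltW (lt_trans ltr01 M1).
    move=> [i j] _ /=; rewrite (ord1 i); exact: le_trans (gb _ gx j) (ltW M1).
  apply: (@preimage_closed _ _ g [set 1]); last exact: closed_eq.
  by move=> x _; apply: cg.
have [c Sc H] := EVT_max_rV S0 cS (continuous_subspaceT cf).
exists c; split; first by move: Sc; rewrite inE.
by move=> y gy; apply: H; rewrite inE.
Qed.

Lemma cont_sum (R : realType) n (I : finType) (h : I -> 'rV[R]_n -> R) :
  (forall i, continuous (h i)) -> continuous (fun x => \sum_i h i x).
Proof.
move=> ch.
have : forall s : seq I, continuous (fun x => \sum_(i <- s) h i x).
  elim=> [|a s IH].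
    under eq_fun do rewrite big_nil; exact: cst_continuous.
  under eq_fun do rewrite big_cons.
  by move=> x; exact: (continuousD (ch a x) (IH x)).
by move=> H; exact: H.
Qed.
Section Alg.
Variable R : realType.

Definition bf n (M : 'M[R]_n) (x y : 'rV[R]_n) := (x *m M *m y^T) 0 0.
Definition sq n (x : 'rV[R]_n) := \sum_(i < n) x 0 i ^+ 2.

Lemma bfE n (M : 'M[R]_n) (x y : 'rV[R]_n) : bf M x y = \sum_(i < n) \sum_(j < n) x 0 i * M i j * y 0 j.
Proof.
rewrite /bf mxE; under eq_bigr do rewrite !mxE big_distrl /=.
rewrite exchange_big /=; apply: eq_bigr => i _; apply: eq_bigr => j _.
by [].
Qed.

Lemma bf1 n (x y : 'rV[R]_n) : bf 1%:M x y = \sum_(i < n) x 0 i * y 0 i.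
Proof. by rewrite /bf mulmx1 mxE; under eq_bigr do rewrite mxE. Qed.

Lemma sqE n (x : 'rV[R]_n) : sq x = bf 1%:M x x.
Proof. by rewrite bf1 /sq; under eq_bigr do rewrite expr2. Qed.

Lemma bf_sym n (M : 'M[R]_n) : M^T = M -> forall x y, bf M x y = bf M y x.
Proof.
move=> sM x y; rewrite !bfE exchange_big; apply: eq_bigr => i _; apply: eq_bigr => j _.
rewrite -{1}sM mxE. ring.

Qed.

Lemma bf_expand n (M : 'M[R]_n) (x y : 'rV[R]_n) t :
  bf M (x + t *: y) (x + t *: y) =
  bf M x x + t * bf M x y + t * bf M y x + t ^+ 2 * bf M y y.
Proof.
rewrite !bfE !mulr_sumr -!big_split /=; apply: eq_bigr => i _.
rewrite !mulr_sumr -!big_split /=; apply: eq_bigr => j _.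
rewrite !mxE; ring.
Qed.

Lemma bfZ n (M : 'M[R]_n) a (x : 'rV[R]_n) : bf M (a *: x) (a *: x) = a ^+ 2 * bf M x x.
Proof.
rewrite !bfE !mulr_sumr; apply: eq_bigr => i _.
rewrite !mulr_sumr; apply: eq_bigr => j _.
rewrite !mxE; ring.
Qed.

Lemma sq_ge0 n (x : 'rV[R]_n) : 0 <= sq x.
Proof. by apply: sumr_ge0 => i _; rewrite sqr_ge0. Qed.

Lemma sq_eq0 n (x : 'rV[R]_n) : sq x = 0 -> x = 0.
Proof.
move/eqP; rewrite psumr_eq0; last by move=> i _; rewrite sqr_ge0.
move/allP => H; apply/matrixP => i j; rewrite (ord1 i) mxE.
by move: (H j (mem_index_enum _)); rewrite /= sqrf_eq0 => /eqP.
Qed.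

Lemma quad (a b : R) : 0 <= a -> (forall t, 0 < t -> a * t + b * t ^+ 2 <= 0) -> a = 0.
Proof.
move=> a0 H; apply/eqP; rewrite eq_le a0 andbT; apply/negP => /negP; rewrite -ltNge => ap.
set k := `|b| + 1.
have kp : 0 < k by rewrite /k ltr_wpDl.
have hb : - `|b| <= b by rewrite lerNnormlW.
set t := a / (2 * k).
have tp : 0 < t by rewrite divr_gt0 // mulr_gt0.
have tk : t * (2 * k) = a by rewrite /t mulfVK // mulf_neq0 // gt_eqF.
have := H t tp.
rewrite /k in tk kp. nra.
Qed.


Lemma perron n (A : 'M[R]_n) : A^T = A -> (forall i j, 0 <= A i j) -> A != 0 ->
  exists (u : 'rV[R]_n) rho, 0 < rho /\ (forall i, 0 <= u 0 i) /\ sq u = 1 /\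
   u *m A = rho *: u /\ forall l, eigenvalue A l -> `|l| <= rho.
Proof.
move=> sA nA nz.
have [i0 [j0 Aij]] : exists i j, A i j != 0.
  apply: contrapT => H; move/eqP: nz; apply; apply/matrixP => i j; rewrite mxE.
  apply/eqP; apply: contrapT => h; apply: H; exists i, j; exact/negP.
have Apos : 0 < A i0 j0 by rewrite lt0r Aij nA.
have cf : continuous (fun x : 'rV[R]_n => bf A x x).
  have -> : (fun x : 'rV[R]_n => bf A x x) =
     (fun x => \sum_(i < n) \sum_(j < n) x 0 i * A i j * x 0 j).
    by apply: funext => x; rewrite bfE.
  apply: cont_sum => i; apply: cont_sum => j x.
  exact: (continuousM (continuousM (@coord_continuous R 1 n 0 i x) (@cst_continuous _ _ (A i j) x)) (@coord_continuous R 1 n 0 j x)).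
have cg : continuous (@sq n).
  rewrite /sq; apply: cont_sum => i x.
  under eq_fun do rewrite expr2.
  exact: (continuousM (@coord_continuous R 1 n 0 i x) (@coord_continuous R 1 n 0 i x)).
have ex1 : exists x : 'rV[R]_n, sq x = 1.
  exists (\row_j (j == i0)%:R); rewrite /sq (bigD1 i0) //= big1 ?mxE ?eqxx.
    by rewrite expr1n addr0.
  by move=> j /negbTE ji; rewrite mxE ji expr0n.
have bnd : forall x : 'rV[R]_n, sq x = 1 -> forall i, `|x 0 i| <= 1.
  move=> x sx i.
  have : x 0 i ^+ 2 <= 1.
    rewrite -sx /sq (bigD1 i) //= lerDl; apply: sumr_ge0 => *; exact: sqr_ge0.
  move=> h; rewrite ler_norml; apply/andP; split; nra.
have [xm [sxm maxm]] := exmax cf cg ex1 bnd.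
set rho := bf A xm xm.
have hom : forall y, bf A y y <= rho * sq y.
  move=> y; have [/sq_eq0 -> | sp] := eqVneq (sq y) 0.
    rewrite /bf !mul0mx mxE /sq big1 ?mulr0 // => i _; by rewrite mxE expr0n.
  have sp' : 0 < sq y by rewrite lt0r sp sq_ge0.
  set a := (Num.sqrt (sq y))^-1.
  have a2 : a ^+ 2 = (sq y)^-1 by rewrite /a exprVn sqr_sqrtr // ltW.
  have sa : sq (a *: y) = 1.
    rewrite !sqE bfZ -sqE a2 mulVf //.
  have := maxm _ sa; rewrite bfZ a2 -/rho => h.
  by rewrite -ler_pdivrMr // mulrC.
set u := map_mx (fun a => `|a|) xm.
have absle : forall y : 'rV[R]_n, `|bf A y y| <= bf A (map_mx (fun a => `|a|) y) (map_mx (fun a => `|a|) y).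
  move=> y; rewrite !bfE; apply: le_trans (ler_norm_sum _ _ _) _.
  apply: ler_sum => i _; apply: le_trans (ler_norm_sum _ _ _) _.
  apply: ler_sum => j _; rewrite !mxE !normrM (ger0_norm (nA i j)) //.
have sqabs : forall y : 'rV[R]_n, sq (map_mx (fun a => `|a|) y) = sq y.
  by move=> y; rewrite /sq; apply: eq_bigr => i _; rewrite mxE real_normK ?num_real.
have su : sq u = 1 by rewrite sqabs.
have fu : bf A u u = rho.
  apply/le_anti/andP; split; first by have := hom u; rewrite su mulr1.
  exact: le_trans (ler_norm _) (absle xm).
have usym := bf_sym sA.
set z := u *m A - rho *: u.
have key : bf A u z - rho * bf 1%:M u z = sq z.
  rewrite sqE /bf !mulmx1 {3}/z mulmxBl -scalemxAl.
  set P := u *m A *m _; set Q := u *m _.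
  by rewrite !mxE.
have : forall t, 0 < t -> (2 * sq z) * t + (bf A z z - rho * sq z) * t ^+ 2 <= 0.
  move=> t tp; have := hom (u + t *: z).
  rewrite bf_expand !sqE bf_expand -!sqE su fu (usym z u) (bf_sym (@trmx1 R n) z u).
  rewrite -key; move=> h; nra.
move/quad => /(_ (mulr_ge0 (ler0n _ 2) (sq_ge0 z))).
move/eqP; rewrite mulf_eq0 pnatr_eq0 /= => /eqP /sq_eq0 z0.
have uA : u *m A = rho *: u by apply/eqP; rewrite -subr_eq0 -/z z0.
have rhop : 0 < rho.
  set y : 'rV[R]_n := const_mx 1.
  have ge : forall i j, 0 <= y 0 i * A i j * y 0 j.
    by move=> i j; rewrite !mxE mul1r mulr1.
  have : A i0 j0 <= bf A y y.
    rewrite bfE (bigD1 i0) //= (bigD1 j0) //=.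
    have -> : y 0 i0 * A i0 j0 * y 0 j0 = A i0 j0 by rewrite !mxE mul1r mulr1.
    rewrite -addrA lerDl; apply: addr_ge0; apply: sumr_ge0 => i _ //.
    by apply: sumr_ge0 => j _.
  have := hom y; have := sq_ge0 y; nra.
exists u, rho; split => //; split; first by move=> i; rewrite mxE.
split => //; split => // l /eigenvalueP [v vA vnz].
have e1 : bf A v v = l * sq v.
  by rewrite /bf vA -scalemxAl mxE sqE /bf mulmx1.
have sp : 0 < sq v.
  rewrite lt0r sq_ge0 andbT; apply/eqP => /sq_eq0 v0; by rewrite v0 eqxx in vnz.
have : `|l| * sq v <= rho * sq v.
  rewrite -(ger0_norm (ltW sp)) -normrM -e1 (ger0_norm (ltW sp)).
  apply: le_trans (absle v) _; rewrite -(sqabs v); exact: hom.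
by rewrite ler_pM2r.
Qed.

Lemma nonneg_mul p q k (M : 'M[R]_(p, q)) (N : 'M[R]_(q, k)) :
  nonneg_mx M -> nonneg_mx N -> nonneg_mx (M *m N).
Proof. by move=> hM hN i j; rewrite mxE; apply: sumr_ge0 => l _; apply: mulr_ge0. Qed.

Lemma nonneg_tr p q (M : 'M[R]_(p, q)) : nonneg_mx M -> nonneg_mx M^T.
Proof. by move=> hM i j; rewrite mxE. Qed.

Lemma rank_fact n (X : 'M[R]_n) m : snt_fact X m -> (\rank X <= m)%N.
Proof.
move=> [B0 [C0 [_ [_ ->]]]].
apply: leq_trans (mxrankM_maxl _ _) _; apply: leq_trans (mxrankM_maxl _ _) _.
exact: rank_leq_col.
Qed.

Lemma inE_of n r (X : 'M[R]_n) (B' : 'M[R]_(n, r)) (C' : 'M[R]_r) :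
  nonneg_mx B' -> nonneg_mx C' -> C'^T = C' -> X = B' *m C' *m B'^T ->
  (r <= \rank X)%N -> in_E X.
Proof.
move=> nB nC sC eX rX.
have sf : snt_fact X r by exists B', C'.
have rk : \rank X = r by apply/eqP; rewrite eqn_leq rX (rank_fact sf).
split.
  split; first by rewrite eX !trmx_mul trmxK sC mulmxA.
  by rewrite eX; apply: nonneg_mul; [apply: nonneg_mul|apply: nonneg_tr].
rewrite rk; split; first exact: sf. by move=> m /rank_fact; rewrite rk.
Qed.

Lemma rank_keep n (A : 'M[R]_n) (c : 'cV[R]_n) rho alpha :
  A *m c = rho *: c -> c^T *m c = 1%:M -> alpha != rho ->
  (\rank A <= \rank (A - alpha *: (c *m c^T))%R)%N.
Proof.
move=> Ac cc1 ar.
set A' := A - alpha *: (c *m c^T).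
have E : A' *m (c *m c^T) = (rho - alpha) *: (c *m c^T).
  rewrite /A' mulmxBl -scalemxAl !mulmxA Ac -scalemxAl.
  rewrite -(mulmxA c (c^T) c) cc1 mulmx1 scalerBl //.
have ra : rho - alpha != 0 by rewrite subr_eq0 eq_sym.
have -> : A = A' *m (1%:M + (alpha / (rho - alpha)) *: (c *m c^T)).
  rewrite mulmxDr mulmx1 -scalemxAr E scalerA mulfVK // /A'.
  by rewrite subrK.
exact: mxrankM_maxl.
Qed.

Lemma pos_bound (I : finType) (f : I -> R) : (forall i, 0 < f i) ->
  exists2 e, 0 < e & forall i, e <= f i.
Proof.
move=> fp; set S := \sum_i (f i)^-1.
have S0 : 0 <= S by apply: sumr_ge0 => i _; rewrite invr_ge0 ltW.
exists (1 / (1 + S)); first by rewrite divr_gt0 //; lra.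
move=> i; rewrite ler_pdivrMr; last by lra.
set t := (f i)^-1.
have ft : f i * t = 1 by rewrite /t mulfV // gt_eqF.
have tS : t <= S by rewrite /S (bigD1 i) //= lerDl; apply: sumr_ge0 => j _; rewrite invr_ge0 ltW.
have := fp i; nra.
Qed.

Lemma expand n r (B X : 'M[R]_(n, r)) (C : 'M[R]_r) s :
  (B - s *: X) *m C *m (B - s *: X)^T = B *m C *m B^T - s *: (B *m C *m X^T)
     - s *: (X *m C *m B^T) + s ^+ 2 *: (X *m C *m X^T).
Proof.
have -> : (B - s *: X)^T = B^T - s *: X^T by apply/matrixP => i j; rewrite !mxE.
rewrite !mulmxBl !mulmxBr -!scalemxAl -!scalemxAr ?mulmxBl.
rewrite -?scalemxAl ?scalerA -?expr2.
set P1 := B *m C *m B^T; set P2 := B *m C *m X^T; set P3 := X *m C *m B^T.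
set P4 := X *m C *m X^T.
by apply/matrixP => i j; rewrite !mxE; ring.
Qed.

End Alg.

Theorem mainTheorem12 (R : realType) (n r : nat) (A : 'M[R]_n)
  (B : 'M[R]_(n, r)) (C : 'M[R]_r) :
  (0 < r)%N ->
  SNN A -> \rank A = r -> is_st_plus A r ->
  nonneg_mx B -> nonneg_mx C -> C^T = C ->
  A = B *m C *m B^T ->
  pos_mx B \/ pos_mx C ->
  ~ in_bdE A.
Proof.
move=> r0 [sA nA] rkA _ nB nC sC eA hBC [_ H].
have Anz : A != 0.
  apply/eqP => A0; move: r0; by rewrite -rkA A0 mxrank0.
have [u [rho [rhop [nu [su [uA bound]]]]]] := perron sA nA Anz.
set c := u^T.
have Ac : A *m c = rho *: c by rewrite /c -{1}sA -trmx_mul uA linearZ.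
have cc1 : c^T *m c = 1%:M.
  rewrite [LHS]mx11_scalar /c trmxK mxE -su /sq; congr (_%:M).
  by apply: eq_bigr => i _; rewrite mxE expr2.
have pc : perron_vec A c.
  split; first by move=> i j; rewrite mxE (ord1 j).
  split; first by rewrite -su /sq; apply: eq_bigr => i _; rewrite mxE.
  exists rho; split => //; split => //.
  apply/eigenvalueP; exists u => //; apply/eqP => u0.
  by move: su; rewrite u0 /sq big1 => [/eqP|i _]; rewrite ?mxE ?expr0n // eq_sym oner_eq0.
have fin : forall alpha (B' : 'M[R]_(n, r)) (C' : 'M[R]_r), 0 < alpha -> alpha < rho ->
    nonneg_mx B' -> nonneg_mx C' -> C'^T = C' ->
    A - alpha *: (c *m c^T) = B' *m C' *m B'^T -> False.
  move=> alpha B' C' ap ar nB' nC' sC' e'.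
  apply: (H c pc alpha ap); apply: (inE_of nB' nC' sC' e').
  by rewrite -rkA; apply: rank_keep Ac cc1 _; rewrite lt_eqF.
set y := rho^-1 *: (B^T *m c).
have BCy : B *m C *m y = c.
  by rewrite /y -scalemxAr mulmxA -eA Ac scalerA mulVf ?scale1r // gt_eqF.
have ny : nonneg_mx y.
  move=> i j; rewrite mxE; apply: mulr_ge0; first by rewrite invr_ge0 ltW.
  by apply: nonneg_mul; [apply: nonneg_tr | move=> k l; rewrite mxE (ord1 l)].
case: hBC => [pB | pC].
  set gam := (y^T *m C *m y) 0 0.
  have [e ep he] := @pos_bound R _ (fun p : 'I_n * 'I_r => B p.1 p.2 / (1 + `|c p.1 0 * y p.2 0|))
    (fun p => divr_gt0 (pB _ _) (ltr_wpDr (normr_ge0 _) ltr01)).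
  set s := Num.min e (Num.min (rho / 4) (1 + `|gam|)^-1).
  have g1 : 0 < 1 + `|gam| by rewrite ltr_wpDr.
  have sp : 0 < s by rewrite !lt_min ep divr_gt0 //= invr_gt0.
  have se : s <= e by rewrite ge_min lexx.
  have sr : s <= rho / 4 by rewrite !ge_min lexx orbT.
  have sg : s * (1 + `|gam|) <= 1.
    rewrite -ler_pdivlMr // div1r !ge_min lexx !orbT //.
  have gn := ler_norm gam; have gn' : - `|gam| <= gam by rewrite lerNnormlW.
  set alpha := 2 * s - s ^+ 2 * gam.
  set X := c *m y^T.
  apply: (fin alpha (B - s *: X) C) => //.
  - rewrite /alpha; nra.
  - rewrite /alpha; nra.
  - move=> i j.
    have -> : (B - s *: X) i j = B i j - s * (c i 0 * y j 0).
      by rewrite !mxE big_ord1 !mxE.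
    have := he (i, j); rewrite /= ler_pdivlMr; last by rewrite ltr_wpDr.
    have := ler_norm (c i 0 * y j 0); have := normr_ge0 (c i 0 * y j 0); nra.
  - rewrite expand.
    have h1 : B *m C *m X^T = c *m c^T by rewrite /X trmx_mul trmxK mulmxA BCy.
    have yt : y^T *m (C *m B^T) = c^T by rewrite -BCy !trmx_mul sC.
    have h2 : X *m C *m B^T = c *m c^T by rewrite /X -!mulmxA yt.
    have h3 : X *m C *m X^T = gam *: (c *m c^T).
      have -> : X *m C *m X^T = c *m (y^T *m C *m y) *m c^T.
        by rewrite /X trmx_mul trmxK !mulmxA.
      by rewrite [y^T *m C *m y]mx11_scalar mul_mx_scalar -scalemxAl.
    rewrite h1 h2 h3 -eA /alpha; set K := c *m c^T.
    by apply/matrixP => i j; rewrite !mxE; ring.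
set w := C *m y.
have Bw : B *m w = c by rewrite /w mulmxA BCy.
have [e ep he] := @pos_bound R _ (fun p : 'I_r * 'I_r => C p.1 p.2 / (1 + `|w p.1 0 * w p.2 0|))
  (fun p => divr_gt0 (pC _ _) (ltr_wpDr (normr_ge0 _) ltr01)).
set alpha := Num.min e (rho / 2).
have ap : 0 < alpha by rewrite lt_min ep divr_gt0.
have ae : alpha <= e by rewrite ge_min lexx.
have ar : alpha < rho by apply: le_lt_trans (_ : rho / 2 < rho); [rewrite ge_min lexx orbT | lra].
apply: (fin alpha B (C - alpha *: (w *m w^T))) => //.
- move=> i j.
  have -> : (C - alpha *: (w *m w^T)) i j = C i j - alpha * (w i 0 * w j 0).
    by rewrite !mxE big_ord1 !mxE.
  have := he (i, j); rewrite /= ler_pdivlMr; last by rewrite ltr_wpDr.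
  have := ler_norm (w i 0 * w j 0); have := normr_ge0 (w i 0 * w j 0); nra.
- by rewrite linearB linearZ /= trmx_mul trmxK sC.
- by rewrite mulmxBr mulmxBl -scalemxAr -scalemxAl -eA -Bw trmx_mul !mulmxA.
Qed.
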